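(* Let $P\in\Delta$ and $Q_P\in\Delta_P$. The following are equivalent: (1) $MI_{Q_P}(X:Y|Z)=\min_{Q\in\Delta_P}MI_Q(X:Y|Z)$; (2) $MI_{Q_P}(X:Z|Y)=\min_{Q\in\Delta_P}MI_Q(X:Z|Y)$; (3) $MI_{Q_P}(X:(Y,Z))=\min_{Q\in\Delta_P}MI_Q(X:(Y,Z))$; (4) $CoI_{Q_P}(X;Y;Z)=\max_{Q\in\Delta_P}CoI_Q(X;Y;Z)$; (5) $H_{Q_P}(X|Y,Z)=\max_{Q\in\Delta_P}H_Q(X|Y,Z)$. Moreover, $Q\mapsto MI_Q(X:Y|Z)$, $Q\mapsto MI_Q(X:Z|Y)$ and $Q\mapsto MI_Q(X:(Y,Z))$ are convex on $\Delta_P$, and $Q\mapsto CoI_Q(X;Y;Z)$ and $Q\mapsto H_Q(X|Y,Z)$ are concave on $\Delta_P$. Consequently, for fixed $P$, the set of all $Q_P\in\Delta_P$ satisfying these conditions is convex.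
   Context: $X,Y,Z$ are random variables with finite state spaces $\mathcal X,\mathcal Y,\mathcal Z$. $\Delta$ denotes the set of all probability distributions on $\mathcal X\times\mathcal Y\times\mathcal Z$; a subscript $Q$ on an information quantity means it is computed w.r.t. $Q\in\Delta$. For $P\in\Delta$, $\Delta_P=\{Q\in\Delta: Q(X=x,Y=y)=P(X=x,Y=y)\text{ and }Q(X=x,Z=z)=P(X=x,Z=z)\ \forall x,y,z\}$. Co-information: $CoI_Q(X;Y;Z)=MI_Q(X:Y)-MI_Q(X:Y|Z)$. *)

(* Defs.v *)
From mathcomp Require Import all_boot.
From Stdlib Require Import Reals.
Set Implicit Arguments.
Unset Strict Implicit.
Unset Printing Implicit Defensive.
Local Open Scope R_scope.

Definition rsum (T : finType) (f : T -> R) : R := \big[Rplus/0]_(t : T) f t.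

Definition jdist (X Y Z : finType) := X -> Y -> Z -> R.

Definition is_dist (X Y Z : finType) (Q : jdist X Y Z) : Prop :=
  (forall x y z, 0 <= Q x y z) /\
  rsum (fun x : X => rsum (fun y : Y => rsum (fun z : Z => Q x y z))) = 1.

Definition DeltaP (X Y Z : finType) (P Q : jdist X Y Z) : Prop :=
  is_dist Q /\
  (forall x y, rsum (fun z => Q x y z) = rsum (fun z => P x y z)) /\
  (forall x z, rsum (fun y => Q x y z) = rsum (fun y => P x y z)).

Definition xlnx (p : R) : R := if Req_dec_T p 0 then 0 else p * ln p.

Definition ent (T : finType) (p : T -> R) : R := - rsum (fun t => xlnx (p t)).

Section Info.
Variables (X Y Z : finType) (Q : jdist X Y Z).

Definition H_XYZ := ent (fun t : X * Y * Z => Q t.1.1 t.1.2 t.2).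
Definition H_XY := ent (fun t : X * Y => rsum (fun z => Q t.1 t.2 z)).
Definition H_XZ := ent (fun t : X * Z => rsum (fun y => Q t.1 y t.2)).
Definition H_YZ := ent (fun t : Y * Z => rsum (fun x => Q x t.1 t.2)).
Definition H_X := ent (fun x : X => rsum (fun y => rsum (fun z => Q x y z))).
Definition H_Y := ent (fun y : Y => rsum (fun x => rsum (fun z => Q x y z))).
Definition H_Z := ent (fun z : Z => rsum (fun x => rsum (fun y => Q x y z))).

Definition condH_X_YZ := H_XYZ - H_YZ.
Definition MI_X_Y := H_X + H_Y - H_XY.
Definition MI_X_Y_Z := H_XZ + H_YZ - H_XYZ - H_Z.
Definition MI_X_Z_Y := H_XY + H_YZ - H_XYZ - H_Y.
Definition MI_X_YZ := H_X + H_YZ - H_XYZ.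
Definition CoI := MI_X_Y - MI_X_Y_Z.
End Info.

Definition is_min_on (D : Type) (S : D -> Prop) (f : D -> R) (q : D) : Prop :=
  S q /\ forall q', S q' -> f q <= f q'.
Definition is_max_on (D : Type) (S : D -> Prop) (f : D -> R) (q : D) : Prop :=
  S q /\ forall q', S q' -> f q' <= f q.

Definition mix (X Y Z : finType) (t : R) (Q1 Q2 : jdist X Y Z) : jdist X Y Z :=
  fun x y z => t * Q1 x y z + (1 - t) * Q2 x y z.

Definition convex_on (X Y Z : finType) (S : jdist X Y Z -> Prop)
  (f : jdist X Y Z -> R) : Prop :=
  forall Q1 Q2 t, S Q1 -> S Q2 -> 0 <= t <= 1 ->
    f (mix t Q1 Q2) <= t * f Q1 + (1 - t) * f Q2.
Definition concave_on (X Y Z : finType) (S : jdist X Y Z -> Prop)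
  (f : jdist X Y Z -> R) : Prop :=
  forall Q1 Q2 t, S Q1 -> S Q2 -> 0 <= t <= 1 ->
    t * f Q1 + (1 - t) * f Q2 <= f (mix t Q1 Q2).
Definition convex_set (X Y Z : finType) (S : jdist X Y Z -> Prop) : Prop :=
  forall Q1 Q2 t, S Q1 -> S Q2 -> 0 <= t <= 1 -> S (mix t Q1 Q2).

(* Main.v *)
From HB Require Import structures.
Require Import Defs.
From mathcomp Require Import all_boot.
From Stdlib Require Import Reals Lra Psatz.
Local Open Scope R_scope.

Lemma RplusA : associative Rplus. Proof. by move=> a b c; rewrite Rplus_assoc. Qed.
HB.instance Definition _ := Monoid.isComLaw.Build R 0 Rplus RplusA Rplus_comm Rplus_0_l.

Lemma rsum_add (T : finType) (f g : T -> R) :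
  rsum (fun t => f t + g t) = rsum f + rsum g.
Proof. by rewrite /rsum big_split. Qed.

Lemma rsum_scale (T : finType) c (f : T -> R) :
  rsum (fun t => c * f t) = c * rsum f.
Proof. rewrite /rsum; elim/big_rec2: _ => [|i a b _ ->]; ring. Qed.

Lemma rsum_mix (T : finType) t s (f g : T -> R) :
  rsum (fun x => t * f x + s * g x) = t * rsum f + s * rsum g.
Proof. by rewrite rsum_add !rsum_scale. Qed.

Lemma rsum_sub (T : finType) (f g : T -> R) :
  rsum (fun t => f t - g t) = rsum f - rsum g.
Proof.
have -> : rsum (fun t => f t - g t) = rsum (fun t => 1 * f t + (-1) * g t).
  by rewrite /rsum; apply: eq_bigr => i _; ring.
rewrite rsum_mix; ring.
Qed.

Lemma rsum_ext (T : finType) (f g : T -> R) :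
  (forall t, f t = g t) -> rsum f = rsum g.
Proof. by move=> H; rewrite /rsum; apply: eq_bigr => i _. Qed.

Lemma rsum_le (T : finType) (f g : T -> R) :
  (forall t, f t <= g t) -> rsum f <= rsum g.
Proof.
move=> H; rewrite /rsum; elim/big_rec2: _ => [|i a b _ Hab]; first lra.
have := H i; lra.
Qed.

Lemma rsum_lin (T : finType) (f g h : T -> R) t s :
  (forall x, f x <= t * g x + s * h x) -> rsum f <= t * rsum g + s * rsum h.
Proof. move=> H; rewrite -rsum_mix; exact: rsum_le. Qed.

Lemma rsum_term (T : finType) (f : T -> R) t0 :
  (forall t, 0 <= f t) -> f t0 <= rsum f.
Proof.
move=> H; rewrite /rsum (bigD1 t0) //=.
have : 0 <= \big[Rplus/0]_(i | i != t0) f i.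
  elim/big_rec: _ => [|i a _ Ha]; first lra.
  have := H i; lra.
lra.
Qed.

Lemma rsum_pair (A B : finType) (f : A * B -> R) :
  rsum f = rsum (fun a => rsum (fun b => f (a, b))).
Proof. by rewrite /rsum pair_bigA; apply: eq_bigr => -[a b] _. Qed.

Lemma rsum_swap (A B : finType) (f : A -> B -> R) :
  rsum (fun a => rsum (fun b => f a b)) = rsum (fun b => rsum (fun a => f a b)).
Proof. by rewrite /rsum exchange_big. Qed.

Lemma ln_le_sub1 {x} : 0 < x -> ln x <= x - 1.
Proof. move=> Hx; have := exp_ineq1_le (ln x); rewrite exp_ln //; lra. Qed.

Definition Fk a b := a * ln a - a * ln b.

Lemma Fk_ge a c : 0 <= a -> 0 <= c -> (0 < a -> 0 < c) -> a - c <= Fk a c.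
Proof.
move=> Ha Hc Hac; rewrite /Fk.
case: (Req_dec a 0) => [->|Ha0].
  rewrite !Rmult_0_l; lra.
have Ha' : 0 < a by lra.
have Hc' := Hac Ha'.
set r := c / a.
have Hr : 0 < r by rewrite /r; apply: Rdiv_lt_0_compat.
have Ec : c = a * r by rewrite /r; field; lra.
rewrite Ec ln_mult //.
have := ln_le_sub1 Hr => Hl.
have : a * ln r <= a * (r - 1) by apply: Rmult_le_compat_l; lra.
lra.
Qed.

Lemma Fk_hom t a b : 0 <= t -> 0 <= a -> (0 < a -> 0 < b) ->
  Fk (t * a) (t * b) = t * Fk a b.
Proof.
move=> Ht Ha Hab; rewrite /Fk.
case: (Req_dec t 0) => [->|Ht0]; first ring.
case: (Req_dec a 0) => [->|Ha0]; first ring.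
have Ha' : 0 < a by lra.
have Hb := Hab Ha'.
rewrite !ln_mult //; try lra; ring.
Qed.

Lemma Fk_sub a1 a2 b1 b2 : 0 <= a1 -> 0 <= a2 -> 0 <= b1 -> 0 <= b2 ->
  (0 < a1 -> 0 < b1) -> (0 < a2 -> 0 < b2) ->
  Fk (a1 + a2) (b1 + b2) <= Fk a1 b1 + Fk a2 b2.
Proof.
move=> H1 H2 H3 H4 H5 H6.
case: (Req_dec (a1 + a2) 0) => [HA|HA].
  have -> : a1 = 0 by lra. have -> : a2 = 0 by lra.
  rewrite /Fk; apply: Req_le; ring.
have HA' : 0 < a1 + a2 by lra.
have HB : 0 < b1 + b2.
  case: (Req_dec a1 0) => E1.
    have : 0 < a2 by lra. move/H6; lra.
  have : 0 < a1 by lra. move/H5; lra.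
set k := (a1 + a2) / (b1 + b2).
have Hk : 0 < k by rewrite /k; apply: Rdiv_lt_0_compat.
have EA : a1 + a2 = (b1 + b2) * k by rewrite /k; field; lra.
have key : forall a b, 0 <= a -> 0 <= b -> (0 < a -> 0 < b) ->
    Fk a b = Fk a (b * k) + a * ln k /\ a - b * k <= Fk a (b * k).
  move=> a b Ha Hb Hab; split.
    case: (Req_dec a 0) => [->|Ha0]; first (rewrite /Fk; ring).
    have Hb' : 0 < b by apply: Hab; lra.
    rewrite /Fk ln_mult //; ring.
  apply: Fk_ge => //; first nra.
  move=> /Hab Hb'; nra.
have [E1 I1] := key a1 b1 H1 H3 H5.
have [E2 I2] := key a2 b2 H2 H4 H6.
have EF : Fk (a1 + a2) (b1 + b2) = (a1 + a2) * ln k.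
  rewrite /Fk; have -> : ln (a1 + a2) = ln (b1 + b2) + ln k by rewrite EA ln_mult.
  ring.
have Es : a1 - b1 * k + (a2 - b2 * k) = 0 by lra.
rewrite EF E1 E2; lra.
Qed.

Lemma xlnxE p : xlnx p = p * ln p.
Proof. rewrite /xlnx; case: Req_dec_T => [E|_] /=; [rewrite E; ring|ring]. Qed.

Section Info2.
Variables (X Y Z : finType).

Lemma condH_F (Q : jdist X Y Z) : condH_X_YZ Q =
  - rsum (fun y => rsum (fun z => rsum (fun x =>
       Fk (Q x y z) (rsum (fun x' => Q x' y z))))).
Proof.
rewrite /condH_X_YZ /H_XYZ /H_YZ /ent.
have -> : rsum (fun t : X * Y * Z => xlnx (Q t.1.1 t.1.2 t.2)) =
  rsum (fun y => rsum (fun z => rsum (fun x => Q x y z * ln (Q x y z)))).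
  rewrite rsum_pair rsum_pair /= rsum_swap.
  apply: rsum_ext => y; rewrite rsum_swap.
  apply: rsum_ext => z; apply: rsum_ext => x; exact: xlnxE.
have -> : rsum (fun t : Y * Z => xlnx (rsum (fun x => Q x t.1 t.2))) =
  rsum (fun y => rsum (fun z => rsum (fun x => Q x y z * ln (rsum (fun x' => Q x' y z))))).
  rewrite rsum_pair /=.
  apply: rsum_ext => y; apply: rsum_ext => z.
  rewrite xlnxE Rmult_comm -rsum_scale; apply: rsum_ext => x; ring.
rewrite /Fk.
have -> : rsum (fun y => rsum (fun z => rsum (fun x =>
     Q x y z * ln (Q x y z) - Q x y z * ln (rsum (fun x' => Q x' y z))))) =
   rsum (fun y => rsum (fun z => rsum (fun x => Q x y z * ln (Q x y z)))) -
   rsum (fun y => rsum (fun z => rsum (fun x => Q x y z * ln (rsum (fun x' => Q x' y z))))).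
  rewrite -rsum_sub; apply: rsum_ext => y; rewrite -rsum_sub.
  apply: rsum_ext => z; by rewrite -rsum_sub.
ring.
Qed.

Lemma condH_concave (Q1 Q2 : jdist X Y Z) t :
  (forall x y z, 0 <= Q1 x y z) -> (forall x y z, 0 <= Q2 x y z) -> 0 <= t <= 1 ->
  t * condH_X_YZ Q1 + (1 - t) * condH_X_YZ Q2 <= condH_X_YZ (mix t Q1 Q2).
Proof.
move=> H1 H2 Ht; rewrite !condH_F.
suff : rsum (fun y => rsum (fun z => rsum (fun x =>
       Fk (mix t Q1 Q2 x y z) (rsum (fun x' => mix t Q1 Q2 x' y z))))) <=
  t * rsum (fun y => rsum (fun z => rsum (fun x =>
       Fk (Q1 x y z) (rsum (fun x' => Q1 x' y z))))) +
  (1 - t) * rsum (fun y => rsum (fun z => rsum (fun x =>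
       Fk (Q2 x y z) (rsum (fun x' => Q2 x' y z))))) by lra.
apply: rsum_lin => y; apply: rsum_lin => z; apply: rsum_lin => x.
rewrite /mix rsum_mix.
have L1 : Q1 x y z <= rsum (fun x' => Q1 x' y z) by apply: rsum_term => x'.
have L2 : Q2 x y z <= rsum (fun x' => Q2 x' y z) by apply: rsum_term => x'.
have P1 := H1 x y z. have P2 := H2 x y z.
rewrite -(Fk_hom t (Q1 x y z) (rsum (fun x' => Q1 x' y z))); try (intros; lra).
rewrite -(Fk_hom (1 - t) (Q2 x y z) (rsum (fun x' => Q2 x' y z))); try (intros; lra).
apply: Fk_sub; try nra; intros; nra.
Qed.

Lemma mix_DeltaP (P Q1 Q2 : jdist X Y Z) t :
  DeltaP P Q1 -> DeltaP P Q2 -> 0 <= t <= 1 -> DeltaP P (mix t Q1 Q2).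
Proof.
move=> [[N1 S1] [M1 K1]] [[N2 S2] [M2 K2]] Ht; rewrite /mix.
split; [split|split].
- move=> x y z; have := N1 x y z; have := N2 x y z; nra.
- apply: eq_trans (_ : t * rsum (fun x => rsum (fun y => rsum (fun z => Q1 x y z))) +
     (1 - t) * rsum (fun x => rsum (fun y => rsum (fun z => Q2 x y z))) = _); last first.
    rewrite S1 S2; ring.
  rewrite -rsum_mix; apply: rsum_ext => x.
  rewrite -rsum_mix; apply: rsum_ext => y; by rewrite -rsum_mix.
- move=> x y; rewrite rsum_mix M1 M2; ring.
- move=> x z; rewrite rsum_mix K1 K2; ring.
Qed.

Section Const.
Variables (P Q : jdist X Y Z).
Hypothesis HQ : DeltaP P Q.

Lemma cXY : H_XY Q = H_XY P.
Proof. case: HQ => _ [HXY _]; rewrite /H_XY /ent; f_equal; apply: rsum_ext => t; by rewrite HXY. Qed.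
Lemma cXZ : H_XZ Q = H_XZ P.
Proof. case: HQ => _ [_ HXZ]; rewrite /H_XZ /ent; f_equal; apply: rsum_ext => t; by rewrite HXZ. Qed.
Lemma cX : H_X Q = H_X P.
Proof.
case: HQ => _ [HXY _]; rewrite /H_X /ent; f_equal; apply: rsum_ext => x.
f_equal; apply: rsum_ext => y; exact: HXY.
Qed.
Lemma cY : H_Y Q = H_Y P.
Proof.
case: HQ => _ [HXY _]; rewrite /H_Y /ent; f_equal; apply: rsum_ext => y.
f_equal; apply: rsum_ext => x; exact: HXY.
Qed.
Lemma cZ : H_Z Q = H_Z P.
Proof.
case: HQ => _ [_ HXZ]; rewrite /H_Z /ent; f_equal; apply: rsum_ext => z.
f_equal; apply: rsum_ext => x; exact: HXZ.
Qed.

Lemma e1 : MI_X_Y_Z Q = (H_XZ P - H_Z P) - condH_X_YZ Q.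
Proof. rewrite /MI_X_Y_Z /condH_X_YZ cXZ cZ; ring. Qed.
Lemma e2 : MI_X_Z_Y Q = (H_XY P - H_Y P) - condH_X_YZ Q.
Proof. rewrite /MI_X_Z_Y /condH_X_YZ cXY cY; ring. Qed.
Lemma e3 : MI_X_YZ Q = H_X P - condH_X_YZ Q.
Proof. rewrite /MI_X_YZ /condH_X_YZ cX; ring. Qed.
Lemma e4 : CoI Q = (H_X P + H_Y P - H_XY P - H_XZ P + H_Z P) + condH_X_YZ Q.
Proof. rewrite /CoI /MI_X_Y /MI_X_Y_Z /condH_X_YZ cX cY cXY cXZ cZ; ring. Qed.
End Const.
End Info2.

Lemma min_iff (D : Type) (S : D -> Prop) f g k q :
  (forall Q, S Q -> f Q = k - g Q) -> (is_min_on S f q <-> is_max_on S g q).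
Proof.
move=> E; split=> -[Sq H]; split=> // q' Sq'; have := H q' Sq';
  rewrite (E q) // (E q') //; lra.
Qed.

Lemma max_iff (D : Type) (S : D -> Prop) f g k q :
  (forall Q, S Q -> f Q = k + g Q) -> (is_max_on S f q <-> is_max_on S g q).
Proof.
move=> E; split=> -[Sq H]; split=> // q' Sq'; have := H q' Sq';
  rewrite (E q) // (E q') //; lra.
Qed.

Theorem mainTheorem2 (X Y Z : finType) (P : jdist X Y Z) (hP : is_dist P) :
  (forall QP : jdist X Y Z, DeltaP P QP ->
     let c1 := is_min_on (DeltaP P) (@MI_X_Y_Z X Y Z) QP in
     let c2 := is_min_on (DeltaP P) (@MI_X_Z_Y X Y Z) QP in
     let c3 := is_min_on (DeltaP P) (@MI_X_YZ X Y Z) QP in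
     let c4 := is_max_on (DeltaP P) (@CoI X Y Z) QP in
     let c5 := is_max_on (DeltaP P) (@condH_X_YZ X Y Z) QP in
     (c1 <-> c2) /\ (c1 <-> c3) /\ (c1 <-> c4) /\ (c1 <-> c5)) /\
  convex_on (DeltaP P) (@MI_X_Y_Z X Y Z) /\
  convex_on (DeltaP P) (@MI_X_Z_Y X Y Z) /\
  convex_on (DeltaP P) (@MI_X_YZ X Y Z) /\
  concave_on (DeltaP P) (@CoI X Y Z) /\
  concave_on (DeltaP P) (@condH_X_YZ X Y Z) /\
  convex_set (is_min_on (DeltaP P) (@MI_X_Y_Z X Y Z)).
Proof.
have E1 q := min_iff _ _ _ _ _ q (@e1 X Y Z P).
have E2 q := min_iff _ _ _ _ _ q (@e2 X Y Z P).
have E3 q := min_iff _ _ _ _ _ q (@e3 X Y Z P).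
have E4 q := max_iff _ _ _ _ _ q (@e4 X Y Z P).
have Cc : concave_on (DeltaP P) (@condH_X_YZ X Y Z).
  move=> Q1 Q2 t [[N1 _] _] [[N2 _] _] Ht; exact: condH_concave.
have Cv : forall f k, (forall Q, DeltaP P Q -> f Q = k - condH_X_YZ Q) ->
    convex_on (DeltaP P) f.
  move=> f k E Q1 Q2 t D1 D2 Ht.
  have D := mix_DeltaP _ _ _ _ _ _ _ D1 D2 Ht.
  have := Cc Q1 Q2 t D1 D2 Ht.
  rewrite (E _ D) (E _ D1) (E _ D2); lra.
have Cv1 := Cv _ _ (@e1 X Y Z P).
split.
  move=> QP HQP /=.
  split; first by rewrite E1 E2.
  split; first by rewrite E1 E3.
  split; first by rewrite E1 E4.
  exact: E1.
split; first exact: Cv1.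
split; first exact: (Cv _ _ (@e2 X Y Z P)).
split; first exact: (Cv _ _ (@e3 X Y Z P)).
split.
  move=> Q1 Q2 t D1 D2 Ht.
  have D := mix_DeltaP _ _ _ _ _ _ _ D1 D2 Ht.
  have := Cc Q1 Q2 t D1 D2 Ht.
  rewrite (@e4 X Y Z P _ D) (@e4 X Y Z P _ D1) (@e4 X Y Z P _ D2); lra.
split; first exact: Cc.
move=> Q1 Q2 t [D1 M1] [D2 M2] Ht.
have D := mix_DeltaP _ _ _ _ _ _ _ D1 D2 Ht.
split=> // q' Dq.
have := Cv1 Q1 Q2 t D1 D2 Ht.
have := M1 q' Dq. have := M1 Q2 D2. have := M2 Q1 D1.
nra.
Qed.
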